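(* Let $0<a<b$ be real numbers and let $f:(a,b)\to\mathbb{R}$ be real analytic and not identically zero. Assume that: (1) both as $x\to a$ and as $x\to b$ we have $\kappa(f,x)\to\infty$; (2) both as $x\to a$ and as $x\to b$ we have $\limsup |H(f,x)|\leq C$ for some constant $C>0$, where \[H(f,x)=\frac{x^2f(x)f''(x)}{f(x)^2+x^2f'(x)^2}.\] Moreover, the part of hypothesis (2) concerning $x\to a$ (resp. $x\to b$) is automatically satisfied if $f$ admits an analytic extension to $(a-\epsilon,b)$ (resp. $(a,b+\epsilon)$) for some $\epsilon>0$. Then $f$ is amenable.
   Context: Relative distance on $\mathbb{R}$: $\mathrm{dist}(x,y)=0$ if $x=y=0$, $\mathrm{dist}(x,y)=|\log(y/x)|$ if $xy>0$, and $\mathrm{dist}(x,y)=\infty$ otherwise. For a real analytic function $f$ on an open set $\Omega\subseteq\mathbb{R}$ (a union of open intervals), not identically zero, the condition number is $\kappa(f,x)=0$ if $x=0$, $\kappa(f,x)=\infty$ if $x\neq0$ and $f(x)=0$, and $\kappa(f,x)=|x|\,|f'(x)|/|f(x)|$ otherwise; set $\mu(f,x)=1+\kappa(f,x)$. The function $f:\Omega\to\mathbb{R}$ is called amenable if there is a constant $C>0$ such that for every $x\in\Omega$ with $\kappa(f,x)<\infty$, the set $B_x=\{y\in\mathbb{R}:\mathrm{dist}(y,x)<1/(C\mu(f,x))\}$ is contained in $\Omega$, and $\mu(f,y)\leq C\mu(f,x)$ for all $y\in B_x$. *)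

(* Defs.v *)
From Stdlib Require Import Reals Lra.
From Coquelicot Require Import Coquelicot.
Open Scope R_scope.

Definition reldist (x y : R) : Rbar :=
  if Req_EM_T x 0 then
    (if Req_EM_T y 0 then Finite 0 else p_infty)
  else if Rlt_dec 0 (x * y) then Finite (Rabs (ln (y / x)))
  else p_infty.

Definition kappa (f : R -> R) (x : R) : Rbar :=
  if Req_EM_T x 0 then Finite 0
  else if Req_EM_T (f x) 0 then p_infty
  else Finite (Rabs x * Rabs (Derive f x) / Rabs (f x)).

Definition mu (f : R -> R) (x : R) : Rbar := Rbar_plus (Finite 1) (kappa f x).

Definition real_analytic_on (Omega : R -> Prop) (f : R -> R) : Prop :=
  forall x0, Omega x0 ->
    exists r : R, 0 < r /\
    exists c : nat -> R,
      forall x, Rabs (x - x0) < r -> is_pseries c (x - x0) (f x).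

Definition ioo (a b : R) : R -> Prop := fun x => a < x /\ x < b.

Definition amenable (Omega : R -> Prop) (f : R -> R) : Prop :=
  exists C : R, 0 < C /\
    forall x, Omega x ->
    forall k : R, kappa f x = Finite k ->
      (forall y, Rbar_lt (reldist y x) (Finite (1 / (C * (1 + k)))) -> Omega y) /\
      (forall y, Rbar_lt (reldist y x) (Finite (1 / (C * (1 + k)))) ->
          Rbar_le (mu f y) (Finite (C * (1 + k)))).

Definition Hfun (f : R -> R) (x : R) : R :=
  x ^ 2 * f x * Derive_n f 2 x / ((f x) ^ 2 + x ^ 2 * (Derive f x) ^ 2).

Definition kappa_to_infty_right (f : R -> R) (a : R) : Prop :=
  forall M : R, exists d : R, 0 < d /\
    forall x, a < x < a + d -> Rbar_lt (Finite M) (kappa f x).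
Definition kappa_to_infty_left (f : R -> R) (b : R) : Prop :=
  forall M : R, exists d : R, 0 < d /\
    forall x, b - d < x < b -> Rbar_lt (Finite M) (kappa f x).

Definition limsup_H_le_right (f : R -> R) (a C : R) : Prop :=
  forall eps : R, 0 < eps -> exists d : R, 0 < d /\
    forall x, a < x < a + d -> Rabs (Hfun f x) <= C + eps.
Definition limsup_H_le_left (f : R -> R) (b C : R) : Prop :=
  forall eps : R, 0 < eps -> exists d : R, 0 < d /\
    forall x, b - d < x < b -> Rabs (Hfun f x) <= C + eps.

(* Main.v *)
Require Import Defs.
From Stdlib Require Import Reals.
From Coquelicot Require Import Coquelicot.
From Stdlib Require Import Lra Lia Classical Wf_nat.
Open Scope R_scope.

Lemma rad_of (c : nat -> R) (r : R) :
  (forall h, Rabs h < r -> ex_pseries c h) ->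
  forall h, Rabs h < r -> Rbar_lt (Rabs h) (CV_radius c).
Proof.
  intros Hc h Hh.
  set (h' := (Rabs h + r) / 2).
  assert (Hh' : Rabs h' < r).
  { unfold h'. rewrite Rabs_pos_eq. lra. pose proof (Rabs_pos h). lra. }
  assert (L : is_lim_seq (fun n => c n * h' ^ n) 0).
  { apply is_lim_seq_ext with (fun k => scal (pow_n h' k) (c k)).
    intro k. rewrite pow_n_pow. unfold scal; simpl. unfold mult; simpl. ring.
    apply ex_series_lim_0. apply Hc. exact Hh'. }
  assert (Rbar_le (Rabs h') (CV_radius c)).
  { apply Rbar_not_lt_le. intro H. apply (CV_disk_outside c h' H). exact L. }
  eapply Rbar_lt_le_trans. 2: exact H.
  simpl. unfold h'. rewrite (Rabs_pos_eq ((Rabs h + r)/2)). lra.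
  pose proof (Rabs_pos h). lra.
Qed.

Lemma loc_of (x z r : R) (P : R -> Prop) : Rabs (x - z) < r ->
  (forall y, Rabs (y - z) < r -> P y) -> locally x P.
Proof.
  intros Hx HP.
  assert (He : 0 < r - Rabs (x - z)) by lra.
  exists (mkposreal _ He). intros y Hy.
  change (Rabs (y - x) < r - Rabs (x - z)) in Hy.
  apply HP.
  replace (y - z) with ((y - x) + (x - z)) by ring.
  eapply Rle_lt_trans. apply Rabs_triang. lra.
Qed.

Lemma local_struct (g : R -> R) (z r : R) (c : nat -> R) : 0 < r ->
  (forall x, Rabs (x - z) < r -> is_pseries c (x - z) (g x)) ->
  (forall h, Rabs h < r -> Rbar_lt (Rabs h) (CV_radius c)) /\
  forall x, Rabs (x - z) < r ->
    g x = PSeries c (x - z) /\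
    (forall n, Derive_n g n x = PSeries (PS_derive_n n c) (x - z)) /\
    is_derive g x (Derive g x) /\ is_derive (Derive g) x (Derive_n g 2 x).
Proof.
  intros Hr Hc.
  assert (Hrad : forall h, Rabs h < r -> Rbar_lt (Rabs h) (CV_radius c)).
  { apply rad_of. intros h Hh. exists (g (h + z)).
    pose proof (Hc (h + z)) as H1. replace (h + z - z) with h in H1 by ring.
    apply H1. exact Hh. }
  split. exact Hrad.
  intros x Hx.
  assert (Heq : forall y, Rabs (y - z) < r -> g y = PSeries c (y - z)).
  { intros y Hy. symmetry. apply is_pseries_unique. apply Hc. exact Hy. }
  assert (Hloc : locally x (fun t => g t = PSeries c (t - z))).
  { apply (loc_of x z r). exact Hx. exact Heq. }
  assert (Hloc' : locally x (fun t => PSeries c (t - z) = g t)).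
  { apply (loc_of x z r). exact Hx. intros; symmetry; apply Heq; auto. }
  assert (Hex : forall n, ex_derive_n g n x).
  { intro n. apply (ex_derive_n_ext_loc (fun t => PSeries c (t + - z))).
    exact Hloc'. apply ex_derive_n_comp_trans. apply ex_derive_n_PSeries.
    apply Hrad. exact Hx. }
  split. apply Heq; exact Hx.
  split.
  { intro n. rewrite (Derive_n_ext_loc g (fun t => PSeries c (t + - z))).
    rewrite Derive_n_comp_trans. apply Derive_n_PSeries. apply Hrad. exact Hx.
    exact Hloc. }
  split.
  { apply Derive_correct. exact (Hex 1%nat). }
  { apply Derive_correct. exact (Hex 2%nat). }
Qed.

Lemma cont_bound (Q : R -> R) (p : R) : continuity_pt Q p ->
  forall eps, 0 < eps -> exists d, 0 < d /\ forall h, Rabs (h - p) < d -> Rabs (Q h - Q p) < eps.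
Proof.
  intros HQ eps He. destruct (HQ eps He) as [d [Hd H]].
  exists d. split. exact Hd. intros h Hh.
  destruct (Req_dec h p) as [E|E].
  { subst. rewrite Rminus_diag, Rabs_R0. exact He. }
  apply (H h). split. split. constructor. auto. exact Hh.
Qed.

Lemma factor (e : nat -> R) (n : nat) (r : R) : 0 < r ->
  (forall h, Rabs h < r -> Rbar_lt (Rabs h) (CV_radius e)) ->
  (forall k, (k < n)%nat -> e k = 0) ->
  (forall h, PSeries e h = h ^ n * PSeries (PS_decr_n e n) h) /\
  PSeries (PS_decr_n e n) 0 = e n /\
  continuity_pt (PSeries (PS_decr_n e n)) 0.
Proof.
  intros Hr Hrad Hz.
  split. intro h. apply PSeries_decr_n_aux. exact Hz.
  split. rewrite PSeries_0. unfold PS_decr_n. rewrite Nat.add_0_r. reflexivity.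
  apply PSeries_continuity.
  apply (rad_of _ r). intros h Hh. apply ex_pseries_decr_n.
  destruct (Req_dec h 0) as [E|E]. left. exact E.
  right. exists (/ h). change (/ h * h = 1). field. exact E.
  apply CV_radius_inside. apply Hrad. exact Hh.
  rewrite Rabs_R0. exact Hr.
Qed.

Lemma alg0 (x A A1 A2 : R) : A <> 0 ->
  Rabs (x ^ 2 * A * A2 / (A ^ 2 + x ^ 2 * A1 ^ 2)) <= x ^ 2 * Rabs A2 / Rabs A.
Proof.
  intros HA.
  assert (HA2 : 0 < A ^ 2) by (apply pow_lt_0_compat_2 || nra).
  assert (Hx : 0 <= x ^ 2 * A1 ^ 2) by nra.
  assert (Hd : 0 < A ^ 2 + x ^ 2 * A1 ^ 2) by lra.
  unfold Rdiv. rewrite Rabs_mult, Rabs_inv, (Rabs_pos_eq (A ^ 2 + _)) by lra.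
  rewrite !Rabs_mult. rewrite (Rabs_pos_eq (x ^ 2)) by nra.
  assert (HaA : 0 < Rabs A) by (apply Rabs_pos_lt; exact HA).
  assert (E : Rabs A * Rabs A = A ^ 2).
  { rewrite <- Rabs_mult. rewrite Rabs_pos_eq by nra. ring. }
  apply Rle_trans with (x ^ 2 * Rabs A * Rabs A2 * / (Rabs A * Rabs A)).
  apply Rmult_le_compat_l. apply Rmult_le_pos. apply Rmult_le_pos. apply pow2_ge_0. apply Rabs_pos. apply Rabs_pos.
  apply Rinv_le_contravar. nra. lra.
  right. field. lra.
Qed.

Lemma alg1 (x A A1 A2 L : R) : A1 <> 0 -> Rabs (A * A2) <= L * A1 ^ 2 ->
  Rabs (x ^ 2 * A * A2 / (A ^ 2 + x ^ 2 * A1 ^ 2)) <= L.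
Proof.
  intros H1 H2.
  assert (HA1 : 0 < A1 ^ 2) by nra.
  assert (HL : 0 <= L).
  { pose proof (Rabs_pos (A * A2)). destruct (Rle_or_lt 0 L) as [h|h]. exact h. nra. }
  destruct (Req_dec x 0) as [E|E].
  { subst. replace (0 ^ 2 * A * A2 / (A ^ 2 + 0 ^ 2 * A1 ^ 2)) with 0.
    rewrite Rabs_R0. exact HL. unfold Rdiv. ring. }
  assert (Hx2 : 0 < x ^ 2) by nra.
  assert (HA : 0 <= A ^ 2) by nra.
  assert (Hd : x ^ 2 * A1 ^ 2 <= A ^ 2 + x ^ 2 * A1 ^ 2) by lra.
  assert (Hd0 : 0 < x ^ 2 * A1 ^ 2) by nra.
  unfold Rdiv. rewrite Rabs_mult, Rabs_inv, (Rabs_pos_eq (A ^ 2 + _)) by lra.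
  rewrite Rmult_assoc, Rabs_mult, (Rabs_pos_eq (x ^ 2)) by lra.
  apply Rle_trans with (x ^ 2 * Rabs (A * A2) * / (x ^ 2 * A1 ^ 2)).
  apply Rmult_le_compat_l. apply Rmult_le_pos. lra. apply Rabs_pos.
  apply Rinv_le_contravar; lra.
  apply Rle_trans with (x ^ 2 * (L * A1 ^ 2) * / (x ^ 2 * A1 ^ 2)).
  apply Rmult_le_compat_r. left; apply Rinv_0_lt_compat; lra.
  apply Rmult_le_compat_l; lra.
  right. field. split; lra.
Qed.

Lemma min_index (c : nat -> R) : (exists n, c n <> 0) ->
  exists m, c m <> 0 /\ forall k, (k < m)%nat -> c k = 0.
Proof.
  intros [n Hn]. revert Hn. induction n as [n IH] using (well_founded_induction lt_wf).
  intro Hn. destruct (classic (forall k, (k < n)%nat -> c k = 0)) as [H|H].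
  - exists n. auto.
  - apply not_all_ex_not in H. destruct H as [k Hk].
    apply imply_to_and in Hk. destruct Hk as [Hk1 Hk2]. apply (IH k Hk1 Hk2).
Qed.

Lemma div_mono (a a' b b' : R) : 0 <= a <= a' -> 0 < b' <= b -> a / b <= a' / b'.
Proof.
  intros Ha Hb. unfold Rdiv. apply Rle_trans with (a' * / b).
  apply Rmult_le_compat_r. left; apply Rinv_0_lt_compat; lra. lra.
  apply Rmult_le_compat_l. lra. apply Rinv_le_contravar; lra.
Qed.

Lemma abs_x_bound (x z h : R) : Rabs (x - z) < 1 -> x ^ 2 <= (Rabs z + 1) ^ 2.
Proof.
  intros H. rewrite <- pow2_abs. apply pow_incr. split. apply Rabs_pos.
  replace x with (z + (x - z)) by ring. eapply Rle_trans. apply Rabs_triang. lra.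
Qed.

Lemma local_H (g : R -> R) (z r : R) (c : nat -> R) : 0 < r ->
  (forall x, Rabs (x - z) < r -> is_pseries c (x - z) (g x)) ->
  exists d L, 0 < d /\ forall x, Rabs (x - z) < d -> Rabs (Hfun g x) <= L.
Proof.
  intros Hr Hc.
  destruct (local_struct g z r c Hr Hc) as [Hrad Hs].
  assert (Hradn : forall n h, Rabs h < r -> Rbar_lt (Rabs h) (CV_radius (PS_derive_n n c))).
  { intros n h Hh. rewrite CV_radius_derive_n. apply Hrad. exact Hh. }
  destruct (classic (exists n, c n <> 0)) as [Hn|Hn].
  2:{ exists r, 0. split. exact Hr. intros x Hx. destruct (Hs x Hx) as [E _].
      assert (E0 : g x = 0).
      { rewrite E. rewrite (PSeries_ext c (fun _ => 0)). apply PSeries_const_0.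
        intro n. destruct (Req_dec (c n) 0) as [h|h]. exact h. exfalso; apply Hn; eauto. }
      unfold Hfun. rewrite E0. replace (x ^ 2 * 0 * Derive_n g 2 x / (0 ^ 2 + x ^ 2 * Derive g x ^ 2)) with 0 by (unfold Rdiv; ring).
      rewrite Rabs_R0. lra. }
  destruct (min_index c Hn) as [m [Hm Hlow]].
  destruct m as [|m'].
  - (* g z <> 0 *)
    assert (C0 : continuity_pt (PSeries c) 0).
    { apply PSeries_continuity. apply Hrad. rewrite Rabs_R0. exact Hr. }
    assert (C2 : continuity_pt (PSeries (PS_derive_n 2 c)) 0).
    { apply PSeries_continuity. apply Hradn. rewrite Rabs_R0. exact Hr. }
    assert (Hc0 : 0 < Rabs (c 0%nat)) by (apply Rabs_pos_lt; exact Hm).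
    destruct (cont_bound _ _ C0 (Rabs (c 0%nat) / 2)) as [d0 [Hd0 B0]]. lra.
    destruct (cont_bound _ _ C2 1) as [d2 [Hd2 B2]]. lra.
    rewrite PSeries_0 in B0.
    exists (Rmin (Rmin r 1) (Rmin d0 d2)).
    exists ((Rabs z + 1) ^ 2 * (Rabs (PSeries (PS_derive_n 2 c) 0) + 1) / (Rabs (c 0%nat) / 2)).
    split. repeat apply Rmin_pos; lra.
    intros x Hx.
    assert (Hx1 : Rabs (x - z) < r). { eapply Rlt_le_trans. exact Hx. eapply Rle_trans. apply Rmin_l. apply Rmin_l. }
    assert (Hx2 : Rabs (x - z) < 1). { eapply Rlt_le_trans. exact Hx. eapply Rle_trans. apply Rmin_l. apply Rmin_r. }
    assert (Hx3 : Rabs (x - z - 0) < d0). { rewrite Rminus_0_r. eapply Rlt_le_trans. exact Hx. eapply Rle_trans. apply Rmin_r. apply Rmin_l. }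
    assert (Hx4 : Rabs (x - z - 0) < d2). { rewrite Rminus_0_r. eapply Rlt_le_trans. exact Hx. eapply Rle_trans. apply Rmin_r. apply Rmin_r. }
    destruct (Hs x Hx1) as [E0 [En _]].
    specialize (B0 _ Hx3). specialize (B2 _ Hx4).
    assert (Ha : Rabs (c 0%nat) / 2 <= Rabs (g x)).
    { rewrite E0. pose proof (Rabs_triang_inv (c 0%nat) (PSeries c (x - z))).
      rewrite Rabs_minus_sym in B0. lra. }
    assert (Hb : Rabs (Derive_n g 2 x) <= Rabs (PSeries (PS_derive_n 2 c) 0) + 1).
    { rewrite En. pose proof (Rabs_triang_inv (PSeries (PS_derive_n 2 c) (x - z)) (PSeries (PS_derive_n 2 c) 0)). lra. }
    unfold Hfun. eapply Rle_trans. apply alg0.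
    { intro E. rewrite E, Rabs_R0 in Ha. lra. }
    unfold Rdiv at 2. rewrite Rmult_assoc. unfold Rdiv. rewrite Rmult_assoc.
    apply Rmult_le_compat. apply pow2_ge_0.
    apply Rmult_le_pos. apply Rabs_pos. left; apply Rinv_0_lt_compat; lra.
    apply abs_x_bound; auto.
    apply (div_mono _ _ _ _). split. apply Rabs_pos. exact Hb. lra.
  - (* zero of order S m' *)
    set (m := S m') in *.
    set (e1 := PS_derive_n 1 c). set (e2 := PS_derive_n 2 c).
    assert (Z0 : forall k, (k < m)%nat -> c k = 0) by exact Hlow.
    assert (Z1 : forall k, (k < m')%nat -> e1 k = 0).
    { intros k Hk. unfold e1, PS_derive_n. rewrite Hlow. ring. unfold m. lia. }
    assert (Z2 : forall k, (k < pred m')%nat -> e2 k = 0).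
    { intros k Hk. unfold e2, PS_derive_n. rewrite Hlow. ring. unfold m. lia. }
    assert (Hq1 : e1 m' <> 0).
    { unfold e1, PS_derive_n. replace (m' + 1)%nat with m by (unfold m; lia).
      apply Rmult_integral_contrapositive. split. 2: exact Hm.
      unfold Rdiv. apply Rmult_integral_contrapositive. split. apply INR_fact_neq_0.
      apply Rinv_neq_0_compat. apply INR_fact_neq_0. }
    destruct (factor c m r Hr Hrad Z0) as [F0 [V0 C0]].
    destruct (factor e1 m' r Hr (Hradn 1%nat) Z1) as [F1 [V1 C1]].
    destruct (factor e2 (pred m') r Hr (Hradn 2%nat) Z2) as [F2 [V2 C2]].
    set (Q0 := PSeries (PS_decr_n c m)) in *.
    set (Q1 := PSeries (PS_decr_n e1 m')) in *.
    set (Q2 := PSeries (PS_decr_n e2 (pred m'))) in *.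
    assert (Hq1a : 0 < Rabs (e1 m')) by (apply Rabs_pos_lt; exact Hq1).
    destruct (cont_bound _ _ C0 1) as [d0 [Hd0 B0]]. lra.
    destruct (cont_bound _ _ C1 (Rabs (e1 m') / 2)) as [d1 [Hd1 B1]]. lra.
    destruct (cont_bound _ _ C2 1) as [d2 [Hd2 B2]]. lra.
    rewrite V0 in B0. rewrite V1 in B1.
    exists (Rmin (Rmin r 1) (Rmin d0 (Rmin d1 d2))).
    exists ((Rabs (c m) + 1) * (Rabs (Q2 0) + 1) / (Rabs (e1 m') / 2) ^ 2).
    split. repeat apply Rmin_pos; lra.
    intros x Hx.
    assert (Hx1 : Rabs (x - z) < r). { eapply Rlt_le_trans. exact Hx. eapply Rle_trans. apply Rmin_l. apply Rmin_l. }
    assert (Hx2 : Rabs (x - z) < 1). { eapply Rlt_le_trans. exact Hx. eapply Rle_trans. apply Rmin_l. apply Rmin_r. }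
    assert (Hx3 : Rabs (x - z - 0) < d0). { rewrite Rminus_0_r. eapply Rlt_le_trans. exact Hx. eapply Rle_trans. apply Rmin_r. apply Rmin_l. }
    assert (Hx4 : Rabs (x - z - 0) < d1). { rewrite Rminus_0_r. eapply Rlt_le_trans. exact Hx. eapply Rle_trans. apply Rmin_r. eapply Rle_trans. apply Rmin_r. apply Rmin_l. }
    assert (Hx5 : Rabs (x - z - 0) < d2). { rewrite Rminus_0_r. eapply Rlt_le_trans. exact Hx. eapply Rle_trans. apply Rmin_r. eapply Rle_trans. apply Rmin_r. apply Rmin_r. }
    destruct (Hs x Hx1) as [E0 [En _]].
    specialize (B0 _ Hx3). specialize (B1 _ Hx4). specialize (B2 _ Hx5).
    set (h := x - z) in *.
    assert (EA : g x = h ^ m * Q0 h) by (rewrite E0; apply F0).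
    assert (EA1 : Derive g x = h ^ m' * Q1 h) by (rewrite <- F1; apply (En 1%nat)).
    assert (EA2 : Derive_n g 2 x = h ^ pred m' * Q2 h) by (rewrite <- F2; apply (En 2%nat)).
    assert (a0 : Rabs (Q0 h) <= Rabs (c m) + 1).
    { pose proof (Rabs_triang_inv (Q0 h) (c m)). lra. }
    assert (a2 : Rabs (Q2 h) <= Rabs (Q2 0) + 1).
    { pose proof (Rabs_triang_inv (Q2 h) (Q2 0)). lra. }
    assert (a1 : Rabs (e1 m') / 2 <= Rabs (Q1 h)).
    { pose proof (Rabs_triang_inv (e1 m') (Q1 h)). rewrite Rabs_minus_sym in B1. lra. }
    assert (HL : 0 <= (Rabs (c m) + 1) * (Rabs (Q2 0) + 1) / (Rabs (e1 m') / 2) ^ 2).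
    { unfold Rdiv. apply Rmult_le_pos. apply Rmult_le_pos; pose proof (Rabs_pos (c m)); pose proof (Rabs_pos (Q2 0)); lra.
      left. apply Rinv_0_lt_compat. apply pow_lt. lra. }
    destruct (Req_dec h 0) as [Eh|Eh].
    { assert (G0 : g x = 0) by (rewrite EA, Eh; unfold m; simpl; ring).
      unfold Hfun. rewrite G0.
      replace (x ^ 2 * 0 * Derive_n g 2 x / (0 ^ 2 + x ^ 2 * Derive g x ^ 2)) with 0 by (unfold Rdiv; ring).
      rewrite Rabs_R0. exact HL. }
    unfold Hfun. apply alg1.
    { rewrite EA1. apply Rmult_integral_contrapositive. split. apply pow_nonzero. exact Eh.
      intro E. rewrite E, Rabs_R0 in a1. lra. }
    rewrite EA, EA2, EA1.
    assert (Hh1 : Rabs h <= 1) by lra.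
    assert (Hpow : Rabs (h ^ m * h ^ pred m') <= Rabs h ^ (2 * m')).
    { rewrite <- pow_add, <- RPow_abs.
      replace (m + pred m')%nat with (2 * m' + (m + pred m' - 2 * m'))%nat by (unfold m; lia).
      rewrite pow_add. rewrite <- (Rmult_1_r (Rabs h ^ (2 * m'))) at 2.
      apply Rmult_le_compat_l. apply pow_le, Rabs_pos.
      rewrite <- (pow1 (m + pred m' - 2 * m')). apply pow_incr. split. apply Rabs_pos. exact Hh1. }
    replace (h ^ m * Q0 h * (h ^ pred m' * Q2 h)) with ((h ^ m * h ^ pred m') * (Q0 h * Q2 h)) by ring.
    rewrite (Rabs_mult (h ^ m * h ^ pred m')), (Rabs_mult (Q0 h)).
    replace ((h ^ m' * Q1 h) ^ 2) with (Rabs h ^ (2 * m') * (Rabs (Q1 h)) ^ 2).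
    2:{ rewrite pow2_abs. rewrite pow_mult. rewrite pow2_abs. rewrite Rpow_mult_distr.
        rewrite <- !pow_mult. rewrite (Nat.mul_comm 2 m'). reflexivity. }
    set (P := Rabs h ^ (2 * m')).
    assert (HP : 0 <= P) by (apply pow_le, Rabs_pos).
    set (q := Rabs (e1 m') / 2) in *.
    assert (Hq : 0 < q) by (unfold q; lra).
    assert (Hqq : q ^ 2 <= Rabs (Q1 h) ^ 2) by (apply pow_incr; lra).
    apply Rle_trans with (P * ((Rabs (c m) + 1) * (Rabs (Q2 0) + 1))).
    { apply Rmult_le_compat. apply Rabs_pos. apply Rmult_le_pos; apply Rabs_pos. exact Hpow.
      apply Rmult_le_compat; try apply Rabs_pos; lra. }
    set (K := (Rabs (c m) + 1) * (Rabs (Q2 0) + 1)) in *.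
    assert (HK : 0 <= K) by (unfold K; pose proof (Rabs_pos (c m)); pose proof (Rabs_pos (Q2 0)); apply Rmult_le_pos; lra).
    replace (K / q ^ 2 * (P * Rabs (Q1 h) ^ 2)) with (P * K * (Rabs (Q1 h) ^ 2 / q ^ 2)) by (field; lra).
    rewrite <- (Rmult_1_r (P * K)) at 1. apply Rmult_le_compat_l. apply Rmult_le_pos; auto.
    apply Rmult_le_reg_r with (q ^ 2). apply pow_lt; lra.
    unfold Rdiv. rewrite Rmult_assoc, Rinv_l. lra. apply pow_nonzero; lra.
Qed.

Lemma der_cont (f : R -> R) x l : is_derive f x l -> continuity_pt f x.
Proof.
  intro H. apply continuity_pt_filterlim. apply (ex_derive_continuous (K := R_AbsRing) (V := R_NormedModule)). exists l. exact H.
Qed.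

Lemma mvt_lip (phi dphi : R -> R) (a b K : R) : a <= b ->
  (forall x, a <= x <= b -> is_derive phi x (dphi x)) ->
  (forall x, a <= x <= b -> Rabs (dphi x) <= K) ->
  Rabs (phi b - phi a) <= K * (b - a).
Proof.
  intros Hab HD HB.
  destruct (MVT_gen phi a b dphi) as [c [Hc E]].
  { intros x Hx. apply HD. rewrite Rmin_left, Rmax_right in Hx by lra. lra. }
  { intros x Hx. apply (der_cont _ _ (dphi x)). apply HD. rewrite Rmin_left, Rmax_right in Hx by lra. lra. }
  rewrite Rmin_left, Rmax_right in Hc by lra.
  rewrite E, Rabs_mult, (Rabs_pos_eq (b - a)) by lra.
  apply Rmult_le_compat_r. lra. apply HB. exact Hc.
Qed.

Lemma mvt_nonneg (phi dphi : R -> R) (a b : R) : a <= b ->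
  (forall x, a <= x <= b -> is_derive phi x (dphi x)) ->
  (forall x, a <= x <= b -> 0 <= dphi x) -> phi a <= phi b.
Proof.
  intros Hab HD HB.
  destruct (MVT_gen phi a b dphi) as [c [Hc E]].
  { intros x Hx. apply HD. rewrite Rmin_left, Rmax_right in Hx by lra. lra. }
  { intros x Hx. apply (der_cont _ _ (dphi x)). apply HD. rewrite Rmin_left, Rmax_right in Hx by lra. lra. }
  rewrite Rmin_left, Rmax_right in Hc by lra.
  assert (0 <= dphi c * (b - a)). apply Rmult_le_pos. apply HB; exact Hc. lra. lra.
Qed.

Lemma atan_le_id (y : R) : 0 <= y -> atan y <= y.
Proof.
  intro Hy.
  assert (H := mvt_nonneg (fun t => t - atan t) (fun t => 1 - / (1 + t²)) 0 y Hy).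
  cbv beta in H. rewrite atan_0 in H. assert (0 - 0 <= y - atan y). apply H.
  - intros x _. auto_derive. auto. unfold Rsqr. field. nra.
  - intros x _. assert (1 <= 1 + x²) by (unfold Rsqr; nra).
    assert (/ (1 + x²) <= 1). { rewrite <- Rinv_1. apply Rinv_le_contravar; lra. } lra.
  - lra.
Qed.

Lemma atan_ge (y : R) : 0 <= y -> y / (1 + y) <= atan y.
Proof.
  intro Hy.
  assert (H := mvt_nonneg (fun t => atan t - t / (1 + t)) (fun t => / (1 + t²) - / (1 + t) ^ 2) 0 y Hy).
  cbv beta in H. rewrite atan_0 in H. replace (0 / (1 + 0)) with 0 in H by (unfold Rdiv; ring).
  assert (0 - 0 <= atan y - y / (1 + y)). apply H.
  - intros x Hx. auto_derive. lra. unfold Rsqr. field. nra.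
  - intros x Hx. assert (0 < 1 + x²) by (unfold Rsqr; nra).
    assert (1 + x² <= (1 + x) ^ 2) by (unfold Rsqr; nra).
    assert (/ (1 + x) ^ 2 <= / (1 + x²)) by (apply Rinv_le_contravar; lra). lra.
  - lra.
Qed.

Lemma atan_abs (w : R) : Rabs (atan w) = atan (Rabs w).
Proof.
  destruct (Rle_or_lt 0 w) as [H|H].
  - rewrite (Rabs_pos_eq w H). apply Rabs_pos_eq.
    destruct H as [H|H]. left. rewrite <- atan_0. apply atan_increasing. exact H.
    subst. rewrite atan_0. lra.
  - rewrite (Rabs_left w H). rewrite Rabs_left. rewrite atan_opp. ring.
    rewrite <- atan_0. apply atan_increasing. exact H.
Qed.

Lemma atan_k_bound (k : R) : 0 <= k -> atan k <= PI / 2 - 1 / (1 + k).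
Proof.
  intro Hk. destruct Hk as [Hk|Hk].
  - assert (E : atan k = PI / 2 - atan (/ k)) by (rewrite atan_inv; [ring|exact Hk]).
    rewrite E. assert (H := atan_ge (/ k)).
    assert (0 <= / k) by (left; apply Rinv_0_lt_compat; exact Hk).
    specialize (H H0).
    replace (/ k / (1 + / k)) with (1 / (1 + k)) in H by (field; lra). lra.
  - subst. rewrite atan_0. pose proof PI2_1. replace (1 / (1 + 0)) with 1 by field. lra.
Qed.

Lemma atan_step (k w d : R) : 0 <= k -> 0 <= d <= 1 / (2 * (1 + k)) ->
  Rabs (atan w) <= atan k + d -> Rabs w <= 2 * (1 + k).
Proof.
  intros Hk Hd Hw. destruct (Rle_or_lt (Rabs w) (2 * (1 + k))) as [H|H]. exact H.
  exfalso. set (m := 2 * (1 + k)) in *.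
  assert (Hm : 0 < m) by (unfold m; lra).
  assert (H1 : atan m < atan (Rabs w)) by (apply atan_increasing; exact H).
  assert (E : atan m = PI / 2 - atan (/ m)) by (rewrite atan_inv; [ring|exact Hm]).
  assert (H2 : atan (/ m) <= / m) by (apply atan_le_id; left; apply Rinv_0_lt_compat; exact Hm).
  rewrite <- atan_abs in H1. pose proof (atan_k_bound k Hk).
  assert (E2 : / m = 1 / (1 + k) - 1 / m) by (unfold m; field; lra).
  lra.
Qed.

Lemma real_ind (p q : R) (P : R -> Prop) : p <= q ->
  (forall s, p <= s <= q -> (forall w, p <= w < s -> P w) -> P s) ->
  (forall s, p <= s < q -> (forall w, p <= w <= s -> P w) ->
     exists d, 0 < d /\ forall w, s < w < s + d -> P w) ->
  forall w, p <= w <= q -> P w.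
Proof.
  intros Hpq Hcl Hop.
  set (E := fun s => p <= s <= q /\ forall w, p <= w <= s -> P w).
  assert (Pp : P p). { apply Hcl. lra. intros w Hw. lra. }
  assert (Hb : bound E). { exists q. intros s [Hs _]. lra. }
  assert (He : exists x, E x). { exists p. split. lra. intros w Hw. replace w with p by lra. exact Pp. }
  destruct (completeness E Hb He) as [m [Hub Hlub]].
  assert (Hpm : p <= m) by (apply Hub; destruct He; split; [lra| intros w Hw; replace w with p by lra; exact Pp]).
  assert (Hmq : m <= q). { apply Hlub. intros s [Hs _]. lra. }
  assert (Hbel : forall w, p <= w < m -> P w).
  { intros w Hw. apply NNPP. intro HP.
    assert (is_upper_bound E w).
    { intros s [Hs Hs2]. destruct (Rle_or_lt s w) as [h|h]. exact h.
      exfalso. apply HP. apply Hs2. lra. }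
    specialize (Hlub w H). lra. }
  assert (Pm : P m) by (apply Hcl; [lra | exact Hbel]).
  assert (Em : forall w, p <= w <= m -> P w).
  { intros w Hw. destruct (Req_dec w m) as [e|e]. subst; exact Pm. apply Hbel. lra. }
  destruct (Req_dec m q) as [e|e].
  - subst m. exact Em.
  - exfalso. destruct (Hop m) as [d [Hd Hd2]]. lra. exact Em.
    set (s' := Rmin (m + d / 2) q).
    assert (E s').
    { split. unfold s'. split. apply Rmin_case; lra. apply Rmin_r.
      intros w Hw. destruct (Rle_or_lt w m) as [h|h]. apply Em; lra.
      apply Hd2. split. exact h. assert (s' <= m + d / 2) by apply Rmin_l. lra. }
    specialize (Hub s' H). unfold s' in Hub. revert Hub. apply Rmin_case; lra.
Qed.

Lemma sq_pos (x : R) : x <> 0 -> 0 < x ^ 2.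
Proof. intro H. replace (x ^ 2) with (Rsqr x) by (unfold Rsqr; ring). apply Rsqr_pos_lt. exact H. Qed.

Lemma der_lnsq (A B : R -> R) u : A u <> 0 -> is_derive A u (B u) ->
  is_derive (fun x => ln (A x ^ 2)) u (2 * B u / A u).
Proof.
  intros H1 H2.
  assert (Hp : 0 < A u ^ 2) by (apply sq_pos; exact H1).
  assert (H := is_derive_comp ln (fun x => A x ^ 2) u _ _ (is_derive_ln _ Hp) (is_derive_pow A 2 u _ H2)).
  replace (2 * B u / A u) with (scal (INR 2 * B u * A u ^ pred 2) (/ (A u ^ 2))). exact H.
  unfold scal; simpl; unfold mult; simpl. field. exact H1.
Qed.

Lemma exp_le (x y : R) : x <= y -> exp x <= exp y.
Proof. intros [H|H]. left; apply exp_increasing; exact H. subst; lra. Qed.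

Lemma core (al be K C : R) (A B : R -> R) :
  0 <= K -> 3 <= C -> 2 * K <= C ->
  (forall t, al < t < be -> is_derive A t (B t)) ->
  (forall t1 t2, al < t1 -> t1 <= t2 -> t2 < be -> (forall s, t1 <= s <= t2 -> A s <> 0) ->
     Rabs (atan (B t2 / A t2) - atan (B t1 / A t1)) <= K * (t2 - t1)) ->
  (forall M, exists d, 0 < d /\ forall t, be - d < t < be -> A t = 0 \/ M < Rabs (B t / A t)) ->
  forall t0, al < t0 < be -> A t0 <> 0 ->
  forall s, t0 <= s < t0 + 1 / (C * (1 + Rabs (B t0 / A t0))) ->
  s < be /\ A s <> 0 /\ 1 + Rabs (B s / A s) <= C * (1 + Rabs (B t0 / A t0)).
Proof.
  intros HK HC HKC HD HL HB t0 Ht0 HA0.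
  set (k := Rabs (B t0 / A t0)).
  assert (Hk : 0 <= k) by apply Rabs_pos.
  set (r := 1 / (C * (1 + k))).
  set (m := 2 * (1 + k)).
  assert (Hr : 0 < r). { unfold r. apply Rdiv_lt_0_compat. lra. apply Rmult_lt_0_compat; lra. }
  assert (HKr : K * r <= 1 / (2 * (1 + k))).
  { unfold r. replace (K * (1 / (C * (1 + k)))) with ((2 * K) / C * (1 / (2 * (1 + k)))) by (field; lra).
    rewrite <- (Rmult_1_l (1 / (2 * (1 + k)))) at 2. apply Rmult_le_compat_r.
    left. apply Rdiv_lt_0_compat; lra.
    apply Rmult_le_reg_r with C. lra. unfold Rdiv. rewrite Rmult_assoc, Rinv_l; lra. }
  assert (S1 : forall s, t0 <= s < t0 + r -> s < be -> (forall w, t0 <= w <= s -> A w <> 0) ->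
    Rabs (B s / A s) <= m).
  { intros s Hs Hsb Hnz.
    assert (H := HL t0 s (proj1 Ht0) (proj1 Hs) Hsb Hnz).
    apply (atan_step k _ (K * (s - t0))). exact Hk.
    split. apply Rmult_le_pos; lra. eapply Rle_trans. 2: exact HKr. apply Rmult_le_compat_l; lra.
    pose proof (Rabs_triang_inv (atan (B s / A s)) (atan (B t0 / A t0))).
    rewrite (atan_abs (B t0 / A t0)) in H0. fold k in H0. lra. }
  assert (Hcont : forall w, al < w < be -> continuity_pt A w).
  { intros w Hw. apply (der_cont _ _ (B w)). apply HD. exact Hw. }
  assert (S2 : forall s, t0 <= s < t0 + r -> s < be -> forall w, t0 <= w <= s -> A w <> 0).
  { intros s Hs Hsb. apply real_ind. lra.
    - intros w Hw IH. destruct (Req_dec w t0) as [e|e]. subst; exact HA0.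
      set (c0 := exp (ln (A t0 ^ 2) - 2 * m * r)).
      assert (Hc0 : 0 < c0) by apply exp_pos.
      assert (Hlow : forall v, t0 <= v < w -> c0 <= A v ^ 2).
      { intros v Hv.
        assert (Hnz : forall u, t0 <= u <= v -> A u <> 0) by (intros u Hu; apply IH; lra).
        assert (H := mvt_lip (fun x => ln (A x ^ 2)) (fun u => 2 * B u / A u) t0 v (2 * m) (proj1 Hv)).
        cbv beta in H.
        assert (Hb : Rabs (ln (A v ^ 2) - ln (A t0 ^ 2)) <= 2 * m * (v - t0)).
        { apply H.
          - intros u Hu. apply der_lnsq. apply Hnz; exact Hu. apply HD. lra.
          - intros u Hu. unfold Rdiv. rewrite Rmult_assoc, Rabs_mult, Rabs_pos_eq by lra.
            apply Rmult_le_compat_l. lra. apply S1. lra. lra.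
            intros w' Hw'. apply Hnz. lra. }
        unfold c0. rewrite <- (exp_ln (A v ^ 2)) by (apply sq_pos; apply Hnz; lra).
        apply exp_le.
        assert (2 * m * (v - t0) <= 2 * m * r) by (apply Rmult_le_compat_l; unfold m; lra).
        pose proof (Rabs_le_between (ln (A v ^ 2) - ln (A t0 ^ 2)) (2 * m * (v - t0))).
        destruct (Rabs_le_between' (ln (A v ^ 2) - ln (A t0 ^ 2)) 0 (2 * m * (v - t0))) as [h1 _].
        specialize (h1 ltac:(rewrite Rminus_0_r; exact Hb)). lra. }
      intro Aw0.
      destruct (cont_bound A w (Hcont w ltac:(lra)) (Rmin 1 c0)) as [d [Hd Hdb]].
      { apply Rmin_pos; lra. }
      set (v := Rmax t0 (w - d / 2)).
      assert (Hv1 : t0 <= v) by apply Rmax_l.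
      assert (Hv2 : v < w). { unfold v. apply Rmax_case; lra. }
      assert (Hv3 : Rabs (v - w) < d).
      { rewrite Rabs_minus_sym, Rabs_pos_eq by lra. assert (w - d / 2 <= v) by apply Rmax_r. lra. }
      specialize (Hdb v Hv3). rewrite Aw0, Rminus_0_r in Hdb.
      specialize (Hlow v (conj Hv1 Hv2)).
      assert (Hm1 : Rmin 1 c0 <= 1) by apply Rmin_l.
      assert (Hm2 : Rmin 1 c0 <= c0) by apply Rmin_r.
      assert (A v ^ 2 <= Rabs (A v)).
      { rewrite <- pow2_abs. simpl. rewrite Rmult_1_r. pose proof (Rabs_pos (A v)).
        rewrite <- (Rmult_1_r (Rabs (A v))) at 3. apply Rmult_le_compat_l; lra. }
      lra.
    - intros w Hw IH.
      assert (HAw : A w <> 0) by (apply IH; lra).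
      destruct (cont_bound A w (Hcont w ltac:(lra)) (Rabs (A w))) as [d [Hd Hdb]].
      { apply Rabs_pos_lt; exact HAw. }
      exists d. split. exact Hd. intros v Hv Av0.
      assert (Rabs (v - w) < d) by (rewrite Rabs_pos_eq; lra).
      specialize (Hdb v H). rewrite Av0, Rminus_0_l, Rabs_Ropp in Hdb. lra. }
  assert (S3 : forall s, t0 <= s < t0 + r -> s < be).
  { intros s Hs. destruct (Rlt_or_le s be) as [h|h]. exact h. exfalso.
    destruct (HB m) as [d [Hd Hdb]].
    set (v := Rmax t0 (be - d / 2)).
    assert (Hv1 : t0 <= v) by apply Rmax_l.
    assert (Hv2 : v < be). { unfold v. apply Rmax_case; lra. }
    assert (Hv3 : be - d < v). { assert (be - d / 2 <= v) by apply Rmax_r. lra. }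
    assert (Hv4 : v < t0 + r) by lra.
    assert (Hnz := S2 v (conj Hv1 Hv4) Hv2).
    assert (Hu := S1 v (conj Hv1 Hv4) Hv2 Hnz).
    destruct (Hdb v (conj Hv3 Hv2)) as [h1|h1].
    apply (Hnz v). lra. exact h1. lra. }
  intros s Hs. fold k in Hs |- *. fold r in Hs.
  assert (Hsb := S3 s Hs).
  assert (Hnz := S2 s Hs Hsb).
  split. exact Hsb. split. apply Hnz. lra.
  assert (Hu := S1 s Hs Hsb Hnz). unfold m in Hu.
  assert (3 * (1 + k) <= C * (1 + k)) by (apply Rmult_le_compat_r; lra). lra.
Qed.

Lemma dphi_bound (x F F1 F2 : R) : F <> 0 ->
  Rabs ((x * F1 * F + x ^ 2 * F2 * F - x ^ 2 * F1 ^ 2) / (F ^ 2 + x ^ 2 * F1 ^ 2))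
  <= Rabs (x ^ 2 * F * F2 / (F ^ 2 + x ^ 2 * F1 ^ 2)) + 3 / 2.
Proof.
  intro HF. set (D := F ^ 2 + x ^ 2 * F1 ^ 2).
  assert (HF2 : 0 < F ^ 2) by (apply sq_pos; exact HF).
  assert (HD : 0 < D) by (unfold D; nra).
  replace ((x * F1 * F + x ^ 2 * F2 * F - x ^ 2 * F1 ^ 2) / D) with
    (x ^ 2 * F * F2 / D + (x * F1 * F / D - x ^ 2 * F1 ^ 2 / D)) by (field; lra).
  set (H0 := x ^ 2 * F * F2 / D).
  assert (Hi : 0 < / D) by (apply Rinv_0_lt_compat; exact HD).
  assert (E1 : x * F1 * F <= D / 2).
  { pose proof (pow2_ge_0 (F - x * F1)). unfold D. replace ((F - x * F1) ^ 2) with (F ^ 2 + x ^ 2 * F1 ^ 2 - 2 * (x * F1 * F)) in H by ring. lra. }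
  assert (E2 : - (D / 2) <= x * F1 * F).
  { pose proof (pow2_ge_0 (F + x * F1)). unfold D. replace ((F + x * F1) ^ 2) with (F ^ 2 + x ^ 2 * F1 ^ 2 + 2 * (x * F1 * F)) in H by ring. lra. }
  assert (E3 : 0 <= x ^ 2 * F1 ^ 2 <= D).
  { assert (0 <= x ^ 2 * F1 ^ 2) by (apply Rmult_le_pos; apply pow2_ge_0). unfold D; lra. }
  assert (U1 : x * F1 * F / D <= 1 / 2).
  { unfold Rdiv. replace (1 * / 2) with (D / 2 * / D) by (field; lra). apply Rmult_le_compat_r; lra. }
  assert (U2 : - (1 / 2) <= x * F1 * F / D).
  { unfold Rdiv. replace (- (1 * / 2)) with (- (D / 2) * / D) by (field; lra). apply Rmult_le_compat_r; lra. }
  assert (V1 : x ^ 2 * F1 ^ 2 / D <= 1).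
  { unfold Rdiv. replace 1 with (D * / D) by (field; lra). apply Rmult_le_compat_r; lra. }
  assert (V2 : 0 <= x ^ 2 * F1 ^ 2 / D).
  { unfold Rdiv. apply Rmult_le_pos; lra. }
  revert U1 U2 V1 V2. generalize (x * F1 * F / D) (x ^ 2 * F1 ^ 2 / D). intros u v U1 U2 V1 V2.
  unfold Rabs. destruct (Rcase_abs (H0 + (u - v))); destruct (Rcase_abs H0); lra.
Qed.

Definition At (f : R -> R) (t : R) := f (exp t).
Definition Bt (f : R -> R) (t : R) := exp t * Derive f (exp t).

Lemma exp_in (a b t : R) : 0 < a -> a < b -> ln a < t < ln b -> a < exp t < b.
Proof.
  intros Ha Hab [H1 H2].
  rewrite <- (exp_ln a) by lra. rewrite <- (exp_ln b) by lra.
  split; apply exp_increasing; lra.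
Qed.

Lemma tspace (a b L : R) (f : R -> R) : 0 < a -> a < b ->
  (forall x, a < x < b -> is_derive f x (Derive f x)) ->
  (forall x, a < x < b -> is_derive (Derive f) x (Derive_n f 2 x)) ->
  (forall x, a < x < b -> Rabs (Hfun f x) <= L) ->
  (forall t, ln a < t < ln b -> is_derive (At f) t (Bt f t)) /\
  (forall t1 t2, ln a < t1 -> t1 <= t2 -> t2 < ln b -> (forall s, t1 <= s <= t2 -> At f s <> 0) ->
     Rabs (atan (Bt f t2 / At f t2) - atan (Bt f t1 / At f t1)) <= (L + 3 / 2) * (t2 - t1)).
Proof.
  intros Ha Hab Hd1 Hd2 HH.
  assert (HA : forall t, ln a < t < ln b -> is_derive (At f) t (Bt f t)).
  { intros t Ht. pose proof (exp_in a b t Ha Hab Ht) as Hx.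
    assert (H := is_derive_comp f exp t _ _ (Hd1 _ Hx) (is_derive_exp t)).
    unfold At, Bt. exact H. }
  split. exact HA.
  intros t1 t2 Ht1 Ht12 Ht2 Hnz.
  set (dphi := fun t => (exp t * Derive f (exp t) * f (exp t) + exp t ^ 2 * Derive_n f 2 (exp t) * f (exp t)
       - exp t ^ 2 * Derive f (exp t) ^ 2) / (f (exp t) ^ 2 + exp t ^ 2 * Derive f (exp t) ^ 2)).
  apply (mvt_lip (fun t => atan (Bt f t / At f t)) dphi). exact Ht12.
  - intros t Ht. assert (Htt : ln a < t < ln b) by lra.
    pose proof (exp_in a b t Ha Hab Htt) as Hx.
    assert (HAt : At f t <> 0) by (apply Hnz; exact Ht).
    assert (HB' : is_derive (Bt f) t (exp t * Derive f (exp t) + exp t * (exp t * Derive_n f 2 (exp t)))).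
    { assert (H1 := is_derive_comp (Derive f) exp t _ _ (Hd2 _ Hx) (is_derive_exp t)).
      assert (H2 := is_derive_mult exp (fun t => Derive f (exp t)) t _ _ (is_derive_exp t) H1).
      unfold Bt. apply H2. intros; apply Rmult_comm. }
    assert (Hdiv := is_derive_div (Bt f) (At f) t _ _ HB' (HA t Htt) HAt).
    assert (Hc := is_derive_comp atan (fun t => Bt f t / At f t) t _ _ (is_derive_atan _) Hdiv).
    replace (dphi t) with (scal ((((exp t * Derive f (exp t) + exp t * (exp t * Derive_n f 2 (exp t))) * At f t -
        Bt f t * Bt f t) / At f t ^ 2)) (/ (1 + (Bt f t / At f t)²))). exact Hc.
    unfold scal; simpl; unfold mult; simpl. unfold dphi, At, Bt in *. unfold Rsqr.
    assert (0 < f (exp t) ^ 2) by (apply sq_pos; exact HAt).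
    assert (0 <= (exp t * Derive f (exp t)) ^ 2) by apply pow2_ge_0.
    change (Derive (fun x : R => Derive (fun x0 : R => f x0) x) (exp t)) with (Derive_n f 2 (exp t)). 
    assert (N1 : f (exp t) ^ 2 + (exp t * Derive f (exp t)) ^ 2 <> 0) by lra.
    assert (N2 : 1 + exp t * Derive f (exp t) / f (exp t) * (exp t * Derive f (exp t) / f (exp t)) <> 0).
    { assert (0 <= exp t * Derive f (exp t) / f (exp t) * (exp t * Derive f (exp t) / f (exp t))).
      apply Rle_0_sqr. lra. }
    field; repeat split; try assumption.
  - intros t Ht. assert (Htt : ln a < t < ln b) by lra.
    pose proof (exp_in a b t Ha Hab Htt) as Hx.
    assert (HAt : At f t <> 0) by (apply Hnz; exact Ht).
    unfold dphi. eapply Rle_trans. apply dphi_bound. exact HAt.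
    apply Rplus_le_compat_r. apply HH. exact Hx.
Qed.

Lemma core_both (al be K C : R) (A B : R -> R) :
  0 <= K -> 3 <= C -> 2 * K <= C ->
  (forall t, al < t < be -> is_derive A t (B t)) ->
  (forall t1 t2, al < t1 -> t1 <= t2 -> t2 < be -> (forall s, t1 <= s <= t2 -> A s <> 0) ->
     Rabs (atan (B t2 / A t2) - atan (B t1 / A t1)) <= K * (t2 - t1)) ->
  (forall M, exists d, 0 < d /\ forall t, be - d < t < be -> A t = 0 \/ M < Rabs (B t / A t)) ->
  (forall M, exists d, 0 < d /\ forall t, al < t < al + d -> A t = 0 \/ M < Rabs (B t / A t)) ->
  forall t0, al < t0 < be -> A t0 <> 0 ->
  forall s, Rabs (s - t0) < 1 / (C * (1 + Rabs (B t0 / A t0))) ->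
  al < s < be /\ A s <> 0 /\ 1 + Rabs (B s / A s) <= C * (1 + Rabs (B t0 / A t0)).
Proof.
  intros HK HC HKC HD HL HBe HAl t0 Ht0 HA0 s Hs.
  destruct (Rle_or_lt t0 s) as [h|h].
  - rewrite Rabs_pos_eq in Hs by lra.
    destruct (core al be K C A B HK HC HKC HD HL HBe t0 Ht0 HA0 s ltac:(lra)) as [H1 [H2 H3]].
    split. lra. auto.
  - rewrite Rabs_left in Hs by lra.
    set (A' := fun t => A (- t)). set (B' := fun t => - B (- t)).
    assert (E : forall t, Rabs (B' t / A' t) = Rabs (B (- t) / A (- t))).
    { intro t. unfold A', B'. unfold Rdiv. rewrite Ropp_mult_distr_l_reverse, Rabs_Ropp. reflexivity. }
    assert (HD' : forall t, - be < t < - al -> is_derive A' t (B' t)).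
    { intros t Ht. assert (H := is_derive_comp A (fun t => - t) t _ _ (HD (- t) ltac:(lra)) (is_derive_opp (fun t => t) t 1 (is_derive_id t))).
      unfold A', B'. replace (- B (- t)) with (scal (opp 1) (B (- t))). exact H.
      unfold scal, opp; simpl; unfold mult; simpl. unfold opp; simpl. ring. }
    assert (HL' : forall t1 t2, - be < t1 -> t1 <= t2 -> t2 < - al -> (forall s, t1 <= s <= t2 -> A' s <> 0) ->
       Rabs (atan (B' t2 / A' t2) - atan (B' t1 / A' t1)) <= K * (t2 - t1)).
    { intros t1 t2 H1 H2 H3 Hnz.
      assert (H := HL (- t2) (- t1) ltac:(lra) ltac:(lra) ltac:(lra)).
      unfold A', B'. unfold Rdiv in *. rewrite !Ropp_mult_distr_l_reverse, !atan_opp.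
      replace (- atan (B (- t2) * / A (- t2)) - - atan (B (- t1) * / A (- t1))) with
        (- (atan (B (- t2) * / A (- t2)) - atan (B (- t1) * / A (- t1)))) by ring.
      rewrite Rabs_Ropp, Rabs_minus_sym. replace (t2 - t1) with (- t1 - - t2) by ring. apply H.
      intros s' Hs'. replace s' with (- (- s')) by ring. apply Hnz. lra. }
    assert (HB' : forall M, exists d, 0 < d /\ forall t, - al - d < t < - al -> A' t = 0 \/ M < Rabs (B' t / A' t)).
    { intro M. destruct (HAl M) as [d [Hd H]]. exists d. split. exact Hd. intros t Ht.
      rewrite E. apply H. lra. }
    assert (Ht0' : - be < - t0 < - al) by lra.
    assert (HA0' : A' (- t0) <> 0) by (unfold A'; rewrite Ropp_involutive; exact HA0).
    assert (Hs' : - t0 <= - s < - t0 + 1 / (C * (1 + Rabs (B' (- t0) / A' (- t0))))).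
    { rewrite E, Ropp_involutive. lra. }
    destruct (core (- be) (- al) K C A' B' HK HC HKC HD' HL' HB' (- t0) Ht0' HA0' (- s) Hs') as [H1 [H2 H3]].
    rewrite !E, !Ropp_involutive in H3. unfold A' in H2. rewrite Ropp_involutive in H2.
    split. lra. auto.
Qed.

Lemma Hfun_ext (a b x : R) (f g : R -> R) : (forall y, a < y < b -> g y = f y) -> a < x < b ->
  Hfun f x = Hfun g x.
Proof.
  intros Heq Hx.
  assert (Hl : locally x (fun t => f t = g t)).
  { apply (loc_of x x (Rmin (x - a) (b - x))).
    rewrite Rminus_diag, Rabs_R0. apply Rmin_pos; lra.
    intros y Hy. symmetry. apply Heq.
    assert (Rmin (x - a) (b - x) <= x - a) by apply Rmin_l.
    assert (Rmin (x - a) (b - x) <= b - x) by apply Rmin_r.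
    apply Rabs_def2 in Hy. lra. }
  unfold Hfun. rewrite (Derive_ext_loc f g x Hl), (Derive_n_ext_loc f g 2 x Hl).
  assert (f x = g x) by (symmetry; apply Heq; exact Hx). rewrite H. reflexivity.
Qed.

Lemma local_H_f (a b : R) (f : R -> R) : real_analytic_on (ioo a b) f ->
  forall w, a < w < b -> exists d L, 0 < d /\ forall x, Rabs (x - w) < d -> Rabs (Hfun f x) <= L.
Proof.
  intros Han w Hw. destruct (Han w Hw) as [r [Hr [c Hc]]]. apply (local_H f w r c Hr Hc).
Qed.

Lemma middle_bound (a b p q : R) (f : R -> R) : real_analytic_on (ioo a b) f ->
  a < p -> q < b ->
  exists L, forall v, p <= v <= q -> Rabs (Hfun f v) <= L.
Proof.
  intros Han Hp Hq.
  destruct (Rle_or_lt p q) as [Hpq|Hpq].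
  2:{ exists 0. intros v Hv. lra. }
  assert (H := real_ind p q (fun w => exists L, forall v, p <= v <= w -> Rabs (Hfun f v) <= L) Hpq).
  cbv beta in H. apply H; [ | | lra].
  - intros w Hw IH.
    destruct (local_H_f a b f Han w ltac:(lra)) as [d [L0 [Hd HL0]]].
    destruct (Req_dec w p) as [e|e].
    { exists L0. intros v Hv. apply HL0. replace (v - w) with 0 by lra. rewrite Rabs_R0. exact Hd. }
    set (v0 := Rmax p (w - d / 2)).
    assert (Hv0 : p <= v0 < w). { split. apply Rmax_l. unfold v0. apply Rmax_case; lra. }
    destruct (IH v0 Hv0) as [L1 HL1].
    exists (Rmax L0 L1). intros v Hv.
    destruct (Rle_or_lt v v0) as [h|h].
    + eapply Rle_trans. apply HL1. lra. apply Rmax_r.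
    + eapply Rle_trans. apply HL0. 2: apply Rmax_l.
      assert (w - d / 2 <= v0) by apply Rmax_r.
      rewrite Rabs_left1 by lra. lra.
  - intros w Hw IH.
    destruct (IH w ltac:(lra)) as [L1 HL1].
    destruct (local_H_f a b f Han w ltac:(lra)) as [d [L0 [Hd HL0]]].
    exists d. split. exact Hd. intros v Hv. exists (Rmax L0 L1). intros u Hu.
    destruct (Rle_or_lt u w) as [h|h].
    + eapply Rle_trans. apply HL1. lra. apply Rmax_r.
    + eapply Rle_trans. apply HL0. 2: apply Rmax_l. rewrite Rabs_pos_eq; lra.
Qed.

Lemma near_a (a b : R) (f : R -> R) : a < b ->
  ((exists C, 0 < C /\ limsup_H_le_right f a C) \/
   (exists eps, 0 < eps /\ exists g : R -> R,
      real_analytic_on (ioo (a - eps) b) g /\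
      (forall x, ioo a b x -> g x = f x))) ->
  exists d L, 0 < d /\ forall x, a < x < a + d -> x < b -> Rabs (Hfun f x) <= L.
Proof.
  intros Hab [[C [HC Hl]] | [eps [He [g [Hg Heq]]]]].
  - destruct (Hl 1 ltac:(lra)) as [d [Hd H]]. exists d, (C + 1). split. exact Hd.
    intros x Hx _. apply H. exact Hx.
  - destruct (Hg a ltac:(unfold ioo; lra)) as [r [Hr [c Hc]]].
    destruct (local_H g a r c Hr Hc) as [d [L [Hd H]]].
    exists d, L. split. exact Hd. intros x Hx Hxb.
    rewrite (Hfun_ext a b x f g). apply H. rewrite Rabs_pos_eq; lra.
    intros y Hy. apply Heq. exact Hy. lra.
Qed.

Lemma near_b (a b : R) (f : R -> R) : a < b ->
  ((exists C, 0 < C /\ limsup_H_le_left f b C) \/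
   (exists eps, 0 < eps /\ exists g : R -> R,
      real_analytic_on (ioo a (b + eps)) g /\
      (forall x, ioo a b x -> g x = f x))) ->
  exists d L, 0 < d /\ forall x, b - d < x < b -> a < x -> Rabs (Hfun f x) <= L.
Proof.
  intros Hab [[C [HC Hl]] | [eps [He [g [Hg Heq]]]]].
  - destruct (Hl 1 ltac:(lra)) as [d [Hd H]]. exists d, (C + 1). split. exact Hd.
    intros x Hx _. apply H. exact Hx.
  - destruct (Hg b ltac:(unfold ioo; lra)) as [r [Hr [c Hc]]].
    destruct (local_H g b r c Hr Hc) as [d [L [Hd H]]].
    exists d, L. split. exact Hd. intros x Hx Hxa.
    rewrite (Hfun_ext a b x f g). apply H. rewrite Rabs_left; lra.
    intros y Hy. apply Heq. exact Hy. lra.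
Qed.

Lemma Hbound (a b : R) (f : R -> R) : a < b -> real_analytic_on (ioo a b) f ->
  ((exists C, 0 < C /\ limsup_H_le_right f a C) \/
   (exists eps, 0 < eps /\ exists g : R -> R,
      real_analytic_on (ioo (a - eps) b) g /\
      (forall x, ioo a b x -> g x = f x))) ->
  ((exists C, 0 < C /\ limsup_H_le_left f b C) \/
   (exists eps, 0 < eps /\ exists g : R -> R,
      real_analytic_on (ioo a (b + eps)) g /\
      (forall x, ioo a b x -> g x = f x))) ->
  exists L, 0 <= L /\ forall x, a < x < b -> Rabs (Hfun f x) <= L.
Proof.
  intros Hab Han HA HB.
  destruct (near_a a b f Hab HA) as [da [La [Hda HLa]]].
  destruct (near_b a b f Hab HB) as [db [Lb [Hdb HLb]]].
  destruct (middle_bound a b (a + da / 2) (b - db / 2) f Han ltac:(lra) ltac:(lra)) as [Lm HLm].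
  exists (Rmax 0 (Rmax La (Rmax Lb Lm))). split. apply Rmax_l.
  intros x Hx.
  eapply Rle_trans. 2: apply Rmax_r.
  destruct (Rlt_or_le x (a + da / 2)) as [h1|h1].
  { eapply Rle_trans. apply HLa. lra. lra. apply Rmax_l. }
  eapply Rle_trans. 2: apply Rmax_r.
  destruct (Rlt_or_le (b - db / 2) x) as [h2|h2].
  { eapply Rle_trans. apply HLb. lra. lra. apply Rmax_l. }
  eapply Rle_trans. 2: apply Rmax_r. apply HLm. lra.
Qed.

Lemma kappa_val (f : R -> R) x : x <> 0 -> f x <> 0 ->
  kappa f x = Finite (Rabs x * Rabs (Derive f x) / Rabs (f x)).
Proof.
  intros H1 H2. unfold kappa. destruct (Req_EM_T x 0). contradiction.
  destruct (Req_EM_T (f x) 0). contradiction. reflexivity.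
Qed.

Lemma kappa_fin (f : R -> R) x k : x <> 0 -> kappa f x = Finite k ->
  f x <> 0 /\ k = Rabs x * Rabs (Derive f x) / Rabs (f x).
Proof.
  intros H1 H2. unfold kappa in H2. destruct (Req_EM_T x 0). contradiction.
  destruct (Req_EM_T (f x) 0). discriminate.
  split. exact n0. injection H2. auto.
Qed.

Lemma ratio_abs (x F1 F : R) : F <> 0 -> Rabs (x * F1 / F) = Rabs x * Rabs F1 / Rabs F.
Proof.
  intro H. unfold Rdiv. rewrite !Rabs_mult, Rabs_inv. reflexivity.
Qed.

Lemma reldist_inv (x y r : R) : 0 < x -> Rbar_lt (reldist y x) (Finite r) ->
  0 < y /\ Rabs (ln y - ln x) < r.
Proof.
  intros Hx H. unfold reldist in H.
  destruct (Req_EM_T y 0).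
  { destruct (Req_EM_T x 0). lra. simpl in H. contradiction. }
  destruct (Rlt_dec 0 (y * x)) as [h|h].
  2:{ simpl in H. contradiction. }
  simpl in H.
  assert (Hy : 0 < y).
  { destruct (Rle_or_lt y 0) as [h'|h']; auto. nra. }
  split. exact Hy. rewrite ln_div in H by lra. rewrite Rabs_minus_sym. exact H.
Qed.

Lemma HBe_of (a b : R) (f : R -> R) : 0 < a -> a < b -> kappa_to_infty_left f b ->
  forall M, exists d, 0 < d /\ forall t, ln b - d < t < ln b ->
    At f t = 0 \/ M < Rabs (Bt f t / At f t).
Proof.
  intros Ha Hab Hk M. destruct (Hk M) as [d0 [Hd0 H]].
  set (x0 := Rmax (b - d0) a).
  assert (Hx0 : a <= x0 < b). { split. apply Rmax_r. unfold x0. apply Rmax_case; lra. }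
  exists (ln b - ln x0). split. { assert (ln x0 < ln b) by (apply ln_increasing; lra). lra. }
  intros t Ht. assert (He := exp_in x0 b t ltac:(lra) ltac:(lra) ltac:(lra)).
  assert (b - d0 <= x0) by apply Rmax_l.
  unfold At, Bt. destruct (Req_dec (f (exp t)) 0) as [e|e]. left; exact e. right.
  specialize (H (exp t) ltac:(lra)). rewrite kappa_val in H by (try apply Rgt_not_eq, exp_pos; exact e).
  simpl in H. rewrite ratio_abs by exact e. exact H.
Qed.

Lemma HAl_of (a b : R) (f : R -> R) : 0 < a -> a < b -> kappa_to_infty_right f a ->
  forall M, exists d, 0 < d /\ forall t, ln a < t < ln a + d ->
    At f t = 0 \/ M < Rabs (Bt f t / At f t).
Proof.
  intros Ha Hab Hk M. destruct (Hk M) as [d0 [Hd0 H]].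
  set (x1 := Rmin (a + d0) b).
  assert (Hx1 : a < x1 <= b). { split. unfold x1. apply Rmin_case; lra. apply Rmin_r. }
  exists (ln x1 - ln a). split. { assert (ln a < ln x1) by (apply ln_increasing; lra). lra. }
  intros t Ht. assert (He := exp_in a x1 t ltac:(lra) ltac:(lra) ltac:(lra)).
  assert (x1 <= a + d0) by apply Rmin_l.
  unfold At, Bt. destruct (Req_dec (f (exp t)) 0) as [e|e]. left; exact e. right.
  specialize (H (exp t) ltac:(lra)). rewrite kappa_val in H by (try apply Rgt_not_eq, exp_pos; exact e).
  simpl in H. rewrite ratio_abs by exact e. exact H.
Qed.

Theorem proposition1 (a b : R) (f : R -> R) :
  0 < a -> a < b ->
  real_analytic_on (ioo a b) f ->
  (exists x, ioo a b x /\ f x <> 0) ->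
  kappa_to_infty_right f a ->
  kappa_to_infty_left f b ->
  ((exists C, 0 < C /\ limsup_H_le_right f a C) \/
   (exists eps, 0 < eps /\ exists g : R -> R,
      real_analytic_on (ioo (a - eps) b) g /\
      (forall x, ioo a b x -> g x = f x))) ->
  ((exists C, 0 < C /\ limsup_H_le_left f b C) \/
   (exists eps, 0 < eps /\ exists g : R -> R,
      real_analytic_on (ioo a (b + eps)) g /\
      (forall x, ioo a b x -> g x = f x))) ->
  amenable (ioo a b) f.
Proof.
  intros Ha Hab Han _ Hkr Hkl HA HB.
  assert (Hd : forall x, a < x < b -> is_derive f x (Derive f x) /\ is_derive (Derive f) x (Derive_n f 2 x)).
  { intros x Hx. destruct (Han x Hx) as [r [Hr [c Hc]]].
    destruct (local_struct f x r c Hr Hc) as [_ Hs].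
    destruct (Hs x ltac:(rewrite Rminus_diag, Rabs_R0; exact Hr)) as [_ [_ [H1 H2]]]. auto. }
  destruct (Hbound a b f Hab Han HA HB) as [L [HL0 HL]].
  destruct (tspace a b L f Ha Hab (fun x Hx => proj1 (Hd x Hx)) (fun x Hx => proj2 (Hd x Hx)) HL) as [HDt HLt].
  set (K := L + 3 / 2).
  set (C := Rmax 3 (2 * K)).
  assert (HC3 : 3 <= C) by apply Rmax_l.
  assert (HCK : 2 * K <= C) by apply Rmax_r.
  exists C. split. lra.
  intros x Hx k Hk. unfold ioo in Hx.
  destruct (kappa_fin f x k ltac:(lra) Hk) as [Hfx Ek].
  set (t0 := ln x).
  assert (Et0 : exp t0 = x) by (apply exp_ln; lra).
  assert (Ht0 : ln a < t0 < ln b) by (split; apply ln_increasing; lra).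
  assert (HA0 : At f t0 <> 0) by (unfold At; rewrite Et0; exact Hfx).
  assert (Ek' : Rabs (Bt f t0 / At f t0) = k).
  { unfold At, Bt. rewrite Et0, ratio_abs by exact Hfx. symmetry; exact Ek. }
  assert (Hcore : forall y, Rbar_lt (reldist y x) (Finite (1 / (C * (1 + k)))) ->
    ioo a b y /\ f y <> 0 /\ 1 + Rabs (y * Derive f y / f y) <= C * (1 + k)).
  { intros y Hy. destruct (reldist_inv x y _ ltac:(lra) Hy) as [Hy0 Hly].
    rewrite <- Ek' in Hly.
    destruct (core_both (ln a) (ln b) K C (At f) (Bt f) ltac:(unfold K; lra) HC3 HCK HDt HLt
      (HBe_of a b f Ha Hab Hkl) (HAl_of a b f Ha Hab Hkr) t0 Ht0 HA0 (ln y) Hly) as [H1 [H2 H3]].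
    assert (Ey : exp (ln y) = y) by (apply exp_ln; lra).
    rewrite Ek' in H3. unfold At, Bt in H2, H3. rewrite Ey in H2, H3.
    split. rewrite <- Ey. unfold ioo. apply exp_in; lra.
    split; assumption. }
  split.
  - intros y Hy. apply (Hcore y Hy).
  - intros y Hy. destruct (Hcore y Hy) as [[Hya Hyb] [Hfy Hb]].
    unfold mu. rewrite kappa_val by lra. simpl.
    rewrite ratio_abs in Hb by exact Hfy. exact Hb.
Qed.
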